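(* Run the mechanism BFM-VM described in the context with arbitrary $B>0$, $\alpha>1$, $\ell\in\{1,2\}$, with all sellers behaving truthfully. Then $v(S^* )+\rho_1\ge\rho_{M-1}$, and consequently $$\frac{\alpha^2}{\alpha-1}\,v(S^* )\ \ge\ \rho_M.$$
   Context: Setting. $\mathcal{N}$ is a finite set of $n$ sellers. The valuation $v:2^{\mathcal{N}}\to\mathbb{R}_{\ge 0}$ satisfies $v(\emptyset)=0$ and is submodular (for $X\subseteq Y\subseteq\mathcal{N}$ and $u\notin Y$, $v(u\mid Y)\le v(u\mid X)$), not necessarily monotone, where $v(S\mid T)=v(S\cup T)-v(T)$, $v(u\mid T)=v(\{u\}\mid T)$, $v(u)=v(\{u\})$. Each seller $u$ has a private cost $c(u)\ge 0$. $B>0$ is the budget, $[\ell]=\{1,\dots,\ell\}$. Sellers behave truthfully: a seller $u$ offered price $q$ accepts iff $c(u)\le q$. Mechanism BFM-VM (inputs $B$, $\alpha>1$, $\ell\in\{1,2\}$): 1. Offer every seller the price $B$; let $R$ be the set of sellers who accept, and set $p(u)=B$ for $u\in R$. 2. Set $t=1$, $\rho_1=\max_{u\in R}v(u)$, $S_{1,1}=\{u_0\}$ for some $u_0\in\arg\max_{u\in R}v(u)$, and (if $\ell=2$) $S_{2,1}=\emptyset$. 3. Repeat rounds: set $t\leftarrow t+1$, $\rho_t=\alpha\rho_{t-1}$, $S_{i,t}=\emptyset$ for $i\in[\ell]$. Process the sellers $u\in R\setminus\bigcup_{i=1}^{\ell}S_{i,t-1}$ one at a time in a fixed order. For each such $u$: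 pick $j\in\arg\max_{i\in[\ell]}v(u\mid S_{i,t})$ (current contents); update $p(u)\leftarrow\min\{p(u),\ v(u\mid S_{j,t})/(\rho_t/B)\}$ and offer $p(u)$ to $u$. If $u$ accepts: if $v(S_{j,t}\cup\{u\})>\rho_t$, end the round immediately; otherwise add $u$ to $S_{j,t}$. If $u$ rejects, remove $u$ from $R$. After the round, stop if $R\setminus\bigcup_{i=1}^{\ell}(S_{i,t-1}\cup S_{i,t})=\emptyset$; otherwise start another round. 4. Let $M$ be the final value of $t$. Output $S^*\in\arg\max_{A\in\{S_{i,t}: i\in[\ell],\ t\in\{M-1,M\}\}}v(A)$, paying each $u\in S^*$ its current price $p(u)$. Notation: $\rho_t$ is the threshold of round $t$ ($\rho_t=\alpha^{t-1}\rho_1$). *)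

(* Defs.v *)
(* Formalization of mechanism BFM-VM as a relational
   (nondeterministic in tie-breaking) execution trace. *)
From HB Require Import structures.
From mathcomp Require Import all_boot all_order all_algebra.
Set Implicit Arguments. Unset Strict Implicit. Unset Printing Implicit Defensive.
Import Order.TTheory GRing.Theory Num.Theory.
Local Open Scope ring_scope.

Section BFMVM.
Variables (K : realFieldType) (T : finType).
Variables (v : {set T} -> K) (c : T -> K) (B alpha : K) (l : nat).
(* the fixed processing order of the sellers *)
Variable ord : seq T.

Definition marg (u : T) (S : {set T}) : K := v (u |: S) - v S.

Definition submodular : Prop :=
  forall (X Y : {set T}) (u : T), X \subset Y -> u \notin Y -> marg u Y <= marg u X.

Definition rho (rho1 : K) (t : nat) : K := alpha ^+ t.-1 * rho1.

Definition upd_price (p : T -> K) (u : T) (q : K) : T -> K :=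
  fun x => if x == u then q else p x.

Definition add_to (S : 'I_l -> {set T}) (j : 'I_l) (u : T) : 'I_l -> {set T} :=
  fun i => if i == j then u |: S i else S i.

Definition best_bin (S : 'I_l -> {set T}) (u : T) (j : 'I_l) : Prop :=
  forall i : 'I_l, marg u (S i) <= marg u (S j).

Definition offer (p : T -> K) (S : 'I_l -> {set T}) (u : T) (j : 'I_l) (rt : K) : K :=
  Num.min (p u) (marg u (S j) / (rt / B)).

(* run_round rt us Rs p S Rs' p' S' : processing the list us of sellers in a
   round with threshold rt, starting from remaining set Rs, prices p and sets S,
   ends with Rs', p', S'. *)
Inductive run_round (rt : K) : seq T -> {set T} -> (T -> K) -> ('I_l -> {set T}) ->
    {set T} -> (T -> K) -> ('I_l -> {set T}) -> Prop :=
| RoundNil Rs p S : run_round rt [::] Rs p S Rs p S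
| RoundReject u us Rs p S j Rs' p' S' :
    best_bin S u j ->
    ~~ (c u <= offer p S u j rt) ->
    run_round rt us (Rs :\ u) (upd_price p u (offer p S u j rt)) S Rs' p' S' ->
    run_round rt (u :: us) Rs p S Rs' p' S'
| RoundEnd u us Rs p S j :
    best_bin S u j ->
    c u <= offer p S u j rt ->
    rt < v (u |: S j) ->
    run_round rt (u :: us) Rs p S Rs (upd_price p u (offer p S u j rt)) S
| RoundAdd u us Rs p S j Rs' p' S' :
    best_bin S u j ->
    c u <= offer p S u j rt ->
    v (u |: S j) <= rt ->
    run_round rt us Rs (upd_price p u (offer p S u j rt)) (add_to S j u) Rs' p' S' ->
    run_round rt (u :: us) Rs p S Rs' p' S'.

Definition bigU (S : 'I_l -> {set T}) : {set T} := \bigcup_(i : 'I_l) S i.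

Definition to_process (Rs : {set T}) (S : 'I_l -> {set T}) : seq T :=
  [seq u <- ord | (u \in Rs) && (u \notin bigU S)].

Definition emptyS : 'I_l -> {set T} := fun _ => set0.

(* mech_rounds rho1 t Rs p S M SM1 SM pM : after completing round t with
   remaining set Rs, prices p and sets S = (S_{i,t})_i, the mechanism runs
   further rounds and stops with final round index M, sets
   SM1 = (S_{i,M-1})_i, SM = (S_{i,M})_i and final prices pM. *)
Inductive mech_rounds (rho1 : K) : nat -> {set T} -> (T -> K) -> ('I_l -> {set T}) ->
    nat -> ('I_l -> {set T}) -> ('I_l -> {set T}) -> (T -> K) -> Prop :=
| MechStop t Rs p S Rs' p' S' :
    run_round (rho rho1 t.+1) (to_process Rs S) Rs p emptyS Rs' p' S' ->
    Rs' :\: (bigU S :|: bigU S') = set0 ->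
    mech_rounds rho1 t Rs p S t.+1 S S' p'
| MechCont t Rs p S Rs' p' S' M SM1 SM pM :
    run_round (rho rho1 t.+1) (to_process Rs S) Rs p emptyS Rs' p' S' ->
    Rs' :\: (bigU S :|: bigU S') != set0 ->
    mech_rounds rho1 t.+1 Rs' p' S' M SM1 SM pM ->
    mech_rounds rho1 t Rs p S M SM1 SM pM.

Definition R0 : {set T} := [set u | c u <= B].

Definition S1 (u0 : T) : 'I_l -> {set T} :=
  fun i => if val i == 0%N then [set u0] else set0.

Definition is_output (SM1 SM : 'I_l -> {set T}) (Sstar : {set T}) : Prop :=
  (exists i : 'I_l, Sstar = SM1 i \/ Sstar = SM i) /\
  (forall i : 'I_l, v (SM1 i) <= v Sstar /\ v (SM i) <= v Sstar).

End BFMVM.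

(* Main.v *)
Require Import Defs.
From HB Require Import structures.
From mathcomp Require Import all_boot all_order all_algebra.
From mathcomp Require Import lra.
Import Order.TTheory GRing.Theory Num.Theory.
Local Open Scope ring_scope.
Set Implicit Arguments. Unset Strict Implicit.

Section Aux.
Variables (K : realFieldType) (T : finType).
Variables (v : {set T} -> K) (c : T -> K) (B alpha : K) (l : nat).

Lemma bigU_sub (S S' : 'I_l -> {set T}) :
  (forall i, S i \subset S' i) -> (Defs.bigU S) \subset (Defs.bigU S').
Proof.
move=> H; rewrite /Defs.bigU; apply/subsetP => x /bigcupP [i _ xi]; apply/bigcupP; exists i => //.
exact: (subsetP (H i)).
Qed.

Lemma rr_inv rt us Rs p (S : 'I_l -> {set T}) Rs' p' (S' : 'I_l -> {set T}) :
  run_round v c B rt us Rs p S Rs' p' S' ->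
  [/\ Rs' \subset Rs, (forall i, S i \subset S' i) &
   (exists u j, u \in us /\ rt < v (u |: S' j)) \/
   (forall x, x \in us -> (x \notin Rs') || (x \in Defs.bigU S'))].
Proof.
elim=> {us Rs p S Rs' p' S'}.
- move=> Rs p S; split=> //; right=> x; by rewrite in_nil.
- move=> u us Rs p S j Rs' p' S' _ _ _ [H1 H2 H3]; split=> //.
    apply: (subset_trans H1); exact: subsetDl.
  case: H3 => [[w [k [Hw Hk]]]|H3]; [left; exists w, k; by rewrite in_cons Hw orbT|].
  right=> x; rewrite in_cons => /orP [/eqP ->|/H3 //].
  apply/orP; left; apply/negP => /(subsetP H1); by rewrite !inE eqxx.
- move=> u us Rs p S j _ _ H; split=> //; left; exists u, j; by rewrite mem_head.
- move=> u us Rs p S j Rs' p' S' _ _ _ _ [H1 H2 H3]; split=> //.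
    move=> i; apply: subset_trans (H2 i); rewrite /add_to; case: eqP => _ //.
    exact: subsetUr.
  case: H3 => [[w [k [Hw Hk]]]|H3]; [left; exists w, k; by rewrite in_cons Hw orbT|].
  right=> x; rewrite in_cons => /orP [/eqP ->|/H3 //].
  apply/orP; right; move: (subsetP (bigU_sub H2)) => HH; apply: HH; rewrite /Defs.bigU; apply/bigcupP; exists j => //.
  by rewrite /add_to eqxx !inE eqxx.
Qed.

Lemma mr_len ord rho1 t Rs p (S : 'I_l -> {set T}) M SM1 SM pM :
  mech_rounds v c B alpha ord rho1 t Rs p S M SM1 SM pM ->
  M = M.-1.+1 /\ (t <= M.-1)%N.
Proof.
elim=> //= {t Rs p S M SM1 SM pM} t Rs p S Rs' p' S' M SM1 SM pM _ _ _ [-> H].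
split=> //; exact: ltnW.
Qed.


Lemma marg_bound (S : {set T}) u :
  submodular v -> v set0 = 0 -> (forall S, 0 <= v S) ->
  v (u |: S) <= v S + v [set u].
Proof.
move=> vs v0 vge.
case: (boolP (u \in S)) => uS.
  have -> : u |: S = S by apply/setUidPr; rewrite sub1set.
  by rewrite lerDl.
have := vs set0 S u (sub0set _) uS; rewrite /marg setU0 v0 subr0.
by rewrite lerBlDr addrC.
Qed.

Lemma mr_key ord rho1 t Rs p (S : 'I_l -> {set T}) M SM1 SM pM :
  mech_rounds v c B alpha ord rho1 t Rs p S M SM1 SM pM ->
  (forall u, u \in ord) -> submodular v -> v set0 = 0 -> (forall S, 0 <= v S) ->
  (0 < t)%N -> (forall u, u \in Rs -> v [set u] <= rho1) ->
  (exists i, rho alpha rho1 t <= v (S i) + rho1 /\ (t = 1%N -> rho1 <= v (S i))) ->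
  exists i, rho alpha rho1 M.-1 <= v (SM1 i) + rho1 /\ (M.-1 = 1%N -> rho1 <= v (SM1 i)).
Proof.
move=> H ordall vs v0 vge; elim: H => {t Rs p S M SM1 SM pM}.
  by move=> t Rs p S Rs' p' S' _ _ _.
move=> t Rs p S Rs' p' S' M SM1 SM pM Hr Hne _ IH t0 HRs _.
have [H1 H2 H3] := rr_inv Hr.
apply: IH => //.
  by move=> u /(subsetP H1) /HRs.
case: H3 => [[u [j [Hu Hj]]]|H3].
- exists j; split; last by move=> [] t0'; rewrite t0' in t0.
  move: Hu; rewrite mem_filter => /andP [/andP [uRs _] _].
  apply: (le_trans (ltW Hj)); apply: (le_trans (marg_bound (S' j) u vs v0 vge)).
  by rewrite lerD2l HRs.
- exfalso; move/negP: Hne; apply; rewrite setD_eq0; apply/subsetP => x xR.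
  rewrite inE; case: (boolP (x \in Defs.bigU S)) => //= xS.
  have : x \in to_process ord Rs S by rewrite mem_filter (subsetP H1 _ xR) xS ordall.
  by move/H3; rewrite xR.
Qed.

End Aux.


Lemma alg (K : realFieldType) (a r w x : K) : 1 < a -> 0 <= r ->
  (r <= w /\ x = 1) \/ (a <= x /\ x * r <= w + r) ->
  x * a * r <= a ^+ 2 / (a - 1) * w.
Proof.
move=> a1 r0 H.
have a10 : 0 < a - 1 by rewrite subr_gt0.
rewrite [_ / _ * w]mulrAC ler_pdivlMr //.
case: H => [[rw ->]|[ax xr]].
  have h1 : 0 <= a * (w - r) by apply: mulr_ge0; lra.
  nra.
have h1 : 0 <= a * r * (x - a) by apply: mulr_ge0; [apply: mulr_ge0; lra|lra].
have h2 : a^+2 * (x * r) <= a^+2 * (w + r) by apply: ler_wpM2l => //; nra.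
rewrite expr2 in h2 *. nra.
Qed.

Theorem lemma5p2 (K : realFieldType) (T : finType)
  (v : {set T} -> K) (c : T -> K) (B alpha : K) (l : nat) (ord : seq T)
  (ord_uniq : uniq ord) (ord_all : forall u : T, u \in ord)
  (v0 : v set0 = 0) (v_ge0 : forall S : {set T}, 0 <= v S)
  (v_sub : submodular v) (c_ge0 : forall u : T, 0 <= c u)
  (B_gt0 : 0 < B) (alpha_gt1 : 1 < alpha) (hl : (l == 1%N) || (l == 2%N))
  (u0 : T) (hu0 : u0 \in R0 c B)
  (hmax : forall u : T, u \in R0 c B -> v [set u] <= v [set u0])
  (M : nat) (SM1 SM : 'I_l -> {set T}) (pM : T -> K) (Sstar : {set T})
  (hrun : mech_rounds v c B alpha ord (v [set u0]) 1 (R0 c B) (fun _ => B)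
            (@S1 T l u0) M SM1 SM pM)
  (hout : is_output v SM1 SM Sstar) :
  rho alpha (v [set u0]) M.-1 <= v Sstar + v [set u0] /\
  rho alpha (v [set u0]) M <= alpha ^+ 2 / (alpha - 1) * v Sstar.

Proof.
have l0 : (0 < l)%N by case/orP: hl => /eqP ->.
pose i0 : 'I_l := Ordinal l0.
have [Mdef tM] := mr_len hrun.
have HRs : forall u, u \in R0 c B -> v [set u] <= v [set u0] by [].
have Hinit : exists i : 'I_l, rho alpha (v [set u0]) 1 <= v (S1 u0 i) + v [set u0] /\
   (1%N = 1%N -> v [set u0] <= v (S1 u0 i)).
  exists i0; rewrite /S1 /= /rho expr0 mul1r; split; [by rewrite lerDl | by move=> _].
have [i [Hi1 Hi2]] := mr_key hrun ord_all v_sub v0 v_ge0 (isT : (0 < 1)%N) HRs Hinit.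
have [_ /(_ i) [Hs _]] := hout.
have p1 : rho alpha (v [set u0]) M.-1 <= v Sstar + v [set u0].
  by apply: (le_trans Hi1); rewrite lerD2r.
split=> //.
move: Hi2 p1 tM; rewrite Mdef /=; case: M.-1 => [//|k] Hi2 p1 _.
rewrite /rho /= exprSr; rewrite /rho /= in p1.
apply: (alg alpha_gt1 (v_ge0 _)).
case: k Hi2 p1 => [|k] Hi2 p1.
  by left; split; [apply: le_trans (Hi2 erefl) Hs | rewrite expr0].
right; split => //.
rewrite -[X in X <= _]expr1; apply: ler_weXn2l => //; by rewrite ltW.
Qed.
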